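(* Let $a,n$ be positive integers and write $(1+y+\cdots+y^{a-1})^n=\sum_{k=0}^{n(a-1)}c_k\,y^k$. For $0\le i\le a-1$ and a polynomial $f$ of one variable of degree less than $n$, define \[\Sigma_i f(y)=\sum_{k\equiv i\ (\mathrm{mod}\ a)}c_k\,f(y-k).\] Then $\Sigma_i f(y)$ is independent of $i$, and hence \[\Sigma_i f(y)=\frac1a\,(1+S+\cdots+S^{a-1})^n f(y),\] where $S$ is the shift operator $(Sf)(y)=f(y-1)$. *)

(* Defs.v *)
From mathcomp Require Import all_boot all_order all_algebra.
Set Implicit Arguments. Unset Strict Implicit. Unset Printing Implicit Defensive.
Import GRing.Theory Num.Theory.
Local Open Scope ring_scope.

Definition geomP (R : numFieldType) (a : nat) : {poly R} := \sum_(j < a) 'X^j.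

Definition cco (R : numFieldType) (a n k : nat) : R := ((geomP R a) ^+ n)`_k.

Definition shiftk (R : numFieldType) (k : nat) (f : {poly R}) : {poly R} :=
  f \Po ('X - (k%:R)%:P).

Definition Sigma (R : numFieldType) (a n i : nat) (f : {poly R}) : {poly R} :=
  \sum_(k < (n * (a - 1)).+1 | (k %% a)%N == i) cco R a n k *: @shiftk R k f.

Definition Sop (R : numFieldType) (f : {poly R}) : {poly R} := f \Po ('X - 1).

Definition geomS (R : numFieldType) (a : nat) (f : {poly R}) : {poly R} :=
  \sum_(j < a) iter j (@Sop R) f.

(* Main.v *)
Require Import Defs.
From mathcomp Require Import all_boot all_order all_algebra.
Import GRing.Theory Num.Theory.
Local Open Scope ring_scope.

Definition opN {R : numFieldType} (N : nat) (Q f : {poly R}) : {poly R} :=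
  \sum_(k < N) Q`_k *: shiftk k f.

Lemma shiftkS (R : numFieldType) k (f : {poly R}) :
  shiftk k.+1 f = shiftk k (Sop f).
Proof.
rewrite /shiftk /Sop -comp_polyA comp_polyB comp_polyX comp_polyC.
by rewrite -addrA -opprD -polyCD natr1.
Qed.

Lemma Sop_shiftk (R : numFieldType) k (f : {poly R}) :
  Sop (shiftk k f) = shiftk k (Sop f).
Proof.
rewrite /shiftk /Sop -!comp_polyA !comp_polyB !comp_polyX !comp_polyC.
by rewrite addrAC.
Qed.

Lemma shiftk0 (R : numFieldType) (f : {poly R}) : shiftk 0 f = f.
Proof. by rewrite /shiftk subr0 comp_polyXr. Qed.

Lemma opN_addf (R : numFieldType) (N : nat) (Q f g : {poly R}) :
  opN N Q (f + g) = opN N Q f + opN N Q g.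
Proof. by rewrite /opN -big_split; apply: eq_bigr => k _; rewrite /shiftk comp_polyD scalerDr. Qed.

Lemma opN_scalef (R : numFieldType) (N : nat) (Q f : {poly R}) c :
  opN N Q (c *: f) = c *: opN N Q f.
Proof. by rewrite /opN scaler_sumr; apply: eq_bigr => k _; rewrite /shiftk comp_polyZ !scalerA mulrC. Qed.

Lemma opN_0f (R : numFieldType) (N : nat) (Q : {poly R}) : opN N Q 0 = 0.
Proof. by rewrite /opN big1 // => k _; rewrite /shiftk comp_poly0 scaler0. Qed.

Lemma opN_oppf (R : numFieldType) (N : nat) (Q f : {poly R}) : opN N Q (- f) = - opN N Q f.
Proof. by rewrite -scaleN1r opN_scalef scaleN1r. Qed.

Lemma opN_sumf (R : numFieldType) (N : nat) (Q : {poly R}) (I : finType) (F : I -> {poly R}) :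
  opN N Q (\sum_i F i) = \sum_i opN N Q (F i).
Proof.
apply: (big_ind2 (fun x y => opN N Q x = y)) => //; first exact: opN_0f.
by move=> x1 x2 y1 y2 <- <-; rewrite opN_addf.
Qed.

Lemma opN_addQ (R : numFieldType) (N : nat) (P Q f : {poly R}) :
  opN N (P + Q) f = opN N P f + opN N Q f.
Proof. by rewrite /opN -big_split; apply: eq_bigr => k _; rewrite coefD scalerDl. Qed.

Lemma opN_scaleQ (R : numFieldType) (N : nat) (Q f : {poly R}) c :
  opN N (c *: Q) f = c *: opN N Q f.
Proof. by rewrite /opN scaler_sumr; apply: eq_bigr => k _; rewrite coefZ scalerA. Qed.

Lemma opN_sumQ (R : numFieldType) (N : nat) (I : finType) (F : I -> {poly R}) f :
  opN N (\sum_i F i) f = \sum_i opN N (F i) f.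
Proof.
apply: (big_ind2 (fun x y => opN N x f = y)) => //.
  by rewrite /opN big1 // => k _; rewrite coef0 scale0r.
by move=> x1 x2 y1 y2 <- <-; rewrite opN_addQ.
Qed.

Lemma opN_widen (R : numFieldType) (N : nat) M (Q f : {poly R}) :
  (size Q <= N)%N -> (N <= M)%N -> opN N Q f = opN M Q f.
Proof.
move=> hQ hNM; rewrite /opN (big_ord_widen _ (fun k => Q`_k *: shiftk k f) hNM).
rewrite big_mkcond /=; apply: eq_bigr => k _.
case: ifP => // /negbT; rewrite -leqNgt => hk.
by rewrite nth_default ?scale0r // (leq_trans hQ hk).
Qed.

Lemma opN_X (R : numFieldType) (N : nat) (Q f : {poly R}) :
  opN N.+1 ('X * Q) f = opN N Q (Sop f).
Proof.
rewrite /opN big_ord_recl coefXM /= scale0r add0r.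
by apply: eq_bigr => k _; rewrite coefXM /= shiftkS.
Qed.

Definition Dl {R : numFieldType} (f : {poly R}) := Sop f - f.

Lemma size_Dl (R : numFieldType) (f : {poly R}) : (size (Dl f) <= (size f).-1)%N.
Proof.
have [->|fn0] := eqVneq f 0; first by rewrite /Dl /Sop comp_poly0 subr0 size_poly0.
have sX : size ('X - (1 : {poly R})) = 2%N by rewrite -polyC1 size_XsubC.
have hs : size (Sop f) = size f.
  have := size_comp_poly f ('X - 1); rewrite sX /= muln1 -/(Sop f).
  have : Sop f != 0.
    rewrite /Sop; apply/negP => /eqP h.
    have := lead_coef_comp f (q:=('X - 1)); rewrite sX h lead_coef0 => /(_ isT) /esym /eqP.
    by rewrite -polyC1 lead_coefXsubC expr1n mulr1 lead_coef_eq0 (negPf fn0).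
  rewrite -size_poly_gt0 => h1 h2.
  have h3 : (0 < size f)%N by rewrite size_poly_gt0.
  by rewrite -(prednK h1) -(prednK h3) h2.
have hl : lead_coef (Sop f) = lead_coef f.
  by rewrite /Sop lead_coef_comp ?sX // -polyC1 lead_coefXsubC expr1n mulr1.
apply/leq_sizeP => j hj; rewrite /Dl coefB.
have [hjs|] := ltnP j (size f).
  have -> : j = (size f).-1.
    by apply/eqP; rewrite eqn_leq hj /= -ltnS (leq_trans hjs) // leqSpred.
  have e1 : f`_(size f).-1 = lead_coef f by [].
  have e2 : (Sop f)`_(size f).-1 = lead_coef (Sop f) by rewrite /lead_coef hs.
  by rewrite e1 e2 hl subrr.
by move=> hsj; rewrite !nth_default ?subrr // hs.
Qed.

Lemma size_iterDl (R : numFieldType) m (f : {poly R}) :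
  (size (iter m Dl f) <= size f - m)%N.
Proof.
elim: m => [|m IH]; first by rewrite subn0.
rewrite iterS (leq_trans (size_Dl _ _)) // subnS.
by rewrite -!subn1 leq_sub2r.
Qed.

Lemma iterDl_0 (R : numFieldType) m (f : {poly R}) :
  (size f <= m)%N -> iter m Dl f = 0.
Proof.
move=> h; apply/eqP; rewrite -size_poly_eq0 -leqn0.
by rewrite (leq_trans (size_iterDl _ _ _)) // leqn0 subn_eq0.
Qed.

Lemma opN_D (R : numFieldType) (N : nat) (Q f : {poly R}) :
  (size Q <= N)%N -> opN N.+1 (('X - 1%:P) * Q) f = opN N Q (Dl f).
Proof.
move=> hQ; rewrite polyC1 mulrBl mul1r.
rewrite -scaleN1r opN_addQ opN_scaleQ opN_X.
rewrite -(@opN_widen _ N N.+1 Q f hQ (leqnSn N)) /Dl opN_addf.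
by rewrite -scaleN1r opN_scalef addrC.
Qed.

Lemma opN_Dpow (R : numFieldType) m (N : nat) (Q f : {poly R}) :
  (size Q <= N)%N -> opN (N + m) (('X - 1%:P) ^+ m * Q) f = opN N Q (iter m Dl f).
Proof.
elim: m N Q f => [|m IH] N Q f hQ; first by rewrite addn0 expr0 mul1r.
rewrite exprSr -mulrA -addSnnS IH; last first.
  rewrite (leq_trans (size_mul_leq _ _)) // size_XsubC /=.
  by [].
by rewrite opN_D // iterSr.
Qed.

Definition Eres {R : numFieldType} (a i : nat) (P : {poly R}) : {poly R} :=
  \poly_(k < size P) (if (k %% a == i)%N then P`_k else 0).

Lemma coef_Eres (R : numFieldType) a i (P : {poly R}) k :
  (Eres a i P)`_k = if (k %% a == i)%N then P`_k else 0.
Proof.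
rewrite coef_poly; case: ltnP => // hk.
by rewrite nth_default //; case: ifP.
Qed.

Lemma size_Eres (R : numFieldType) a i (P : {poly R}) : (size (Eres a i P) <= size P)%N.
Proof. exact: size_poly. Qed.

Lemma Eres_sum (R : numFieldType) a (P : {poly R}) : (0 < a)%N ->
  \sum_(m < a) Eres a m P = P.
Proof.
move=> ha; apply/polyP => k; rewrite coef_sum.
under eq_bigr => m _ do rewrite coef_Eres.
rewrite -big_mkcond /= (big_pred1 (Ordinal (ltn_pmod k ha))) //.
Qed.

Lemma modres_inj a i j j' : (0 < a)%N -> (j < a)%N -> (j' < a)%N ->
  ((i + a - j) %% a = (i + a - j') %% a)%N -> j = j'.
Proof.
move=> ha hj hj' /eqP h.
have hj1 : (j <= i + a)%N by rewrite (leq_trans (ltnW hj)) // leq_addl.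
have hj2 : (j' <= i + a)%N by rewrite (leq_trans (ltnW hj')) // leq_addl.
have e1 : (i + a - j + (j + j') = i + a + j')%N by rewrite addnA subnK.
have e2 : (i + a - j' + (j + j') = i + a + j)%N by rewrite (addnC j) addnA subnK.
move: h; rewrite -(eqn_modDr (j + j')) e1 e2.
by rewrite eqn_modDl => /eqP; rewrite !modn_small.
Qed.

Lemma reindex_res (V : zmodType) a i (F : nat -> V) : (0 < a)%N ->
  \sum_(j < a) F ((i + a - j) %% a)%N = \sum_(m < a) F m.
Proof.
move=> ha.
pose h := fun j : 'I_a => Ordinal (ltn_pmod (i + a - j) ha).
have hinj : injective h.
  move=> j j' /(congr1 val) /= e; apply/val_inj => /=.
  exact: (modres_inj _ _ _ _ ha (ltn_ord j) (ltn_ord j') e).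
by rewrite [RHS](reindex_inj hinj).
Qed.

Lemma Eres_mulG (R : numFieldType) a i (Q : {poly R}) : (0 < a)%N -> (i < a)%N ->
  Eres a i (geomP R a * Q) = \sum_(j < a) 'X^j * Eres a ((i + a - j) %% a) Q.
Proof.
move=> ha hi; apply/polyP => k; rewrite coef_Eres coef_sum /geomP mulr_suml coef_sum.
have key : forall j : 'I_a, (j <= k)%N ->
    (((k - j) %% a == (i + a - j) %% a) = (k %% a == i))%N.
  move=> j hjk.
  have hj1 : (j <= i + a)%N by rewrite (leq_trans (ltnW (ltn_ord j))) // leq_addl.
  by rewrite -(eqn_modDr j) subnK // subnK // modnDr (modn_small hi).
case: ifP => hk.
  apply: eq_bigr => j _; rewrite !coefXnM; case: ltnP => // hjk.
  by rewrite coef_Eres key // hk.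
rewrite big1 // => j _; rewrite coefXnM; case: ltnP => // hjk.
by rewrite coef_Eres key // hk.
Qed.

Lemma divE (R : numFieldType) a n : (0 < a)%N -> forall i, (i < a)%N ->
  ('X - 1%:P) ^+ n %| Eres a i (geomP R a ^+ n) - (a%:R)^-1 *: geomP R a ^+ n.
Proof.
move=> ha; elim: n => [|n IH] i hi; first by rewrite expr0 dvd1p.
set Q := geomP R a ^+ n; pose D := ('X - 1%:P : {poly R}) ^+ n.
pose H m := (Eres a m Q - (a%:R)^-1 *: Q) %/ D.
have hH : forall m, (m < a)%N -> Eres a m Q - (a%:R)^-1 *: Q = H m * D.
  by move=> m hm; rewrite divpK // IH.
have aN0 : (a%:R : R) != 0 by rewrite pnatr_eq0 -lt0n.
have DN0 : D != 0 by rewrite expf_neq0 // polyXsubC_eq0.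
have hsum : \sum_(m < a) H m = 0.
  have : (\sum_(m < a) H m) * D = 0.
    rewrite mulr_suml -(eq_bigr _ (fun (m : 'I_a) _ => hH m (ltn_ord m))).
    rewrite sumrB Eres_sum // sumr_const card_ord -scaler_nat scalerA mulfV //.
    by rewrite scale1r subrr.
  by move/eqP; rewrite mulf_eq0 (negPf DN0) orbF => /eqP.
have eK : Eres a i (geomP R a ^+ n.+1) - (a%:R)^-1 *: geomP R a ^+ n.+1 =
    (\sum_(j < a) 'X^j * H ((i + a - j) %% a)%N) * D.
  rewrite exprS Eres_mulG // -/Q /geomP mulr_suml scaler_sumr -sumrB mulr_suml.
  apply: eq_bigr => j _; rewrite scalerAr -mulrBr hH ?ltn_pmod //.
  by rewrite mulrA.
rewrite eK exprSr mulrC dvdp_mul ?dvdpp // dvdp_XsubCl /root.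
rewrite horner_sum.
under eq_bigr => j _ do rewrite hornerM hornerXn expr1n mul1r.
rewrite (reindex_res _ a i (fun m => (H m).[1])) // -horner_sum hsum horner0.
by [].
Qed.

Lemma iterSop (R : numFieldType) j (f : {poly R}) : iter j (@Sop R) f = shiftk j f.
Proof.
elim: j f => [|j IH] f; first by rewrite shiftk0.
by rewrite iterSr IH shiftkS.
Qed.

Lemma size_Xn_mul (R : numFieldType) j (Q : {poly R}) : (size ('X^j * Q)%R <= size Q + j)%N.
Proof.
apply/leq_sizeP => k hk; rewrite coefXnM; case: ltnP => // hjk.
by rewrite nth_default // leq_subRL // addnC.
Qed.

Lemma opN_Xn (R : numFieldType) j (N : nat) (Q f : {poly R}) :
  (size Q <= N)%N -> opN (N + j) ('X^j * Q) f = opN N Q (iter j (@Sop R) f).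
Proof.
elim: j N Q f => [|j IH] N Q f hQ; first by rewrite addn0 expr0 mul1r.
rewrite exprSr -mulrA -addSnnS IH; last first.
  by rewrite (leq_trans (size_Xn_mul _ 1 _)) // addn1.
by rewrite opN_X // iterSr.
Qed.

Lemma size_geomP (R : numFieldType) a : (size (geomP R a) <= a)%N.
Proof.
apply/leq_sizeP => k hk; rewrite /geomP coef_sum big1 // => j _.
rewrite coefXn; case: eqP => // e.
by move: hk; rewrite e leqNgt ltn_ord.
Qed.

Lemma opN_G (R : numFieldType) a (N : nat) (Q f : {poly R}) :
  (size Q <= N)%N -> opN (a + N) (geomP R a * Q) f = opN N Q (geomS a f).
Proof.
move=> hQ; rewrite /geomP mulr_suml opN_sumQ /geomS opN_sumf.
apply: eq_bigr => j _.
rewrite -opN_Xn // (opN_widen _ (N + j) (a + N)) //.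
  by rewrite (leq_trans (size_Xn_mul _ _ _)) // leq_add2r.
by rewrite addnC leq_add2r ltnW.
Qed.

Lemma size_geomPn (R : numFieldType) a n : (size (geomP R a ^+ n) <= (n * (a - 1)).+1)%N.
Proof.
rewrite (leq_trans (size_poly_exp_leq _ _)) // ltnS mulnC leq_mul2l.
by rewrite -subn1 leq_sub2r ?size_geomP ?orbT.
Qed.

Lemma iter_geomS (R : numFieldType) a n (f : {poly R}) :
  iter n (@geomS R a) f = opN (n * a).+1 (geomP R a ^+ n) f.
Proof.
elim: n f => [|n IH] f.
  by rewrite /opN big_ord1 expr0 coefC /= scale1r shiftk0.
rewrite iterSr IH -opN_G; last first.
  rewrite (leq_trans (size_poly_exp_leq _ _)) // ltnS mulnC leq_mul2l.
  by rewrite (leq_trans (leq_pred _)) ?size_geomP ?orbT.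
by rewrite -exprS mulSn addnS.
Qed.

Lemma Sigma_opN (R : numFieldType) a n i (f : {poly R}) :
  Sigma a n i f = opN (n * (a - 1)).+1 (Eres a i (geomP R a ^+ n)) f.
Proof.
rewrite /Sigma /opN big_mkcond /=; apply: eq_bigr => k _.
by rewrite coef_Eres /cco; case: ifP => //; rewrite scale0r.
Qed.

Lemma part2 (R : numFieldType) (a n : nat) (f : {poly R}) :
  (0 < a)%N -> (size f <= n)%N ->
  forall i, (i < a)%N -> Sigma a n i f = (a%:R)^-1 *: iter n (@geomS R a) f.
Proof.
move=> ha hf i hi.
set Q := geomP R a ^+ n.
pose D := ('X - 1%:P : {poly R}) ^+ n.
pose H := (Eres a i Q - (a%:R)^-1 *: Q) %/ D.
have eE : Eres a i Q = (a%:R)^-1 *: Q + D * H.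
  by rewrite mulrC divpK ?divE // addrC subrK.
have hQ : (size Q <= (n * (a - 1)).+1)%N by apply: size_geomPn.
pose M := ((n * (a - 1)).+1 + (n * a).+1 + size H + n)%N.
rewrite Sigma_opN (opN_widen _ _ M); last 2 first.
- exact: leq_trans (size_Eres _ _ _ _) hQ.
- by rewrite /M -!addnA leq_addr.
rewrite eE opN_addQ opN_scaleQ iter_geomS.
rewrite -(opN_widen _ (n * a).+1 M); last 2 first.
- by rewrite (leq_trans hQ) // ltnS leq_mul2l leq_subr orbT.
- by rewrite /M -!addnA addnCA leq_addr.
rewrite -(opN_widen _ (size H + n) M); last 2 first.
- rewrite (leq_trans (size_mul_leq _ _)) // /D size_exp_XsubC /=.
  by rewrite addnC.
- by rewrite /M leq_add2r leq_addl.
by rewrite opN_Dpow // iterDl_0 // opN_0f addr0.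
Qed.

Theorem lemma2p2 (R : numFieldType) (a n : nat) (f : {poly R}) :
  (0 < a)%N -> (0 < n)%N -> (size f <= n)%N ->
  (forall i j, (i < a)%N -> (j < a)%N -> Sigma a n i f = Sigma a n j f) /\
  (forall i, (i < a)%N -> Sigma a n i f = (a%:R)^-1 *: iter n (@geomS R a) f).
Proof.
move=> ha _ hf; split.
  by move=> i j hi hj; rewrite !(part2 _ _ _ _ ha hf).
exact: part2.
Qed.
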